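(* Let $G=(V,E)$ be a connected graph and let $v$ be a cut-vertex of $G$ with $v\in\mathrm{core}(G)$. Suppose that for every connected component $C$ of $G-v$, the set $V(C)\cap N(v)$ induces a clique. Then $\gamma(G-v)>\gamma(G)$, i.e. $v\in V^+$.
   Context: All graphs are finite, simple and undirected. A cut-vertex of a connected graph is a vertex whose deletion disconnects the graph. $N(v)$ is the set of neighbors of $v$; $G-v$ is $G$ with $v$ deleted. $\gamma(G)$ is the domination number; a minimum dominating set (mds) is a dominating set of size $\gamma(G)$; $\mathrm{core}(G)$ is the set of vertices in every mds. $V^+=\{v\in V:\gamma(G-v)>\gamma(G)\}$. *)

(* Defs.v *)
(* A finite simple graph on vertex type T : finType is a
   symmetric irreflexive relation e : rel T (hypotheses stated in the theorem). *)
From mathcomp Require Import all_boot.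
Set Implicit Arguments.
Unset Strict Implicit.
Unset Printing Implicit Defensive.

Section Graph.
Variables (T : finType) (e : rel T).

Definition induced_rel (S : {set T}) : rel T :=
  fun x y => [&& x \in S, y \in S & e x y].

Definition nbhd (v : T) : {set T} := [set u | e v u].

Definition dominating (S D : {set T}) : bool :=
  (D \subset S) &&
  [forall x in S, (x \in D) || [exists y in D, e x y]].

(* Domination number of G[S]: the minimum size of a dominating set of G[S]
   (S itself is always dominating). *)
Definition gamma_on (S : {set T}) : nat :=
  #|[arg min_(D < S | dominating S D) #|D|]|.

Definition gamma : nat := gamma_on setT.

Definition is_mds (D : {set T}) : bool :=
  dominating setT D && (#|D| == gamma).

Definition core : {set T} := [set v | [forall D : {set T}, is_mds D ==> (v \in D)]].

Definition connected_graph : Prop := forall x y : T, connect e x y.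

Definition del (v : T) : {set T} := [set: T] :\ v.

Definition cut_vertex (v : T) : Prop :=
  exists x y, [/\ x \in del v, y \in del v & ~~ connect (induced_rel (del v)) x y].

Definition comp_del (v x : T) : {set T} :=
  [set y in del v | connect (induced_rel (del v)) x y].

Definition Vplus : {set T} := [set v | gamma < gamma_on (del v)].

End Graph.

(* Main.v *)
Require Import Defs.
From mathcomp Require Import all_boot.
From mathcomp Require Import zify.

Section L.
Variables (T : finType) (e : rel T).

Lemma gamma_le (S D : {set T}) : dominating e S D -> gamma_on e S <= #|D|.
Proof.
move=> hD; rewrite /gamma_on.
have hS : dominating e S S.
  by apply/andP; split=> //; apply/forallP => x; apply/implyP => ->.
case: (arg_minnP (P:=dominating e S) (fun D : {set T} => #|D|) hS) => D0 _ hm.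
exact: hm.
Qed.

Lemma gamma_dom (S : {set T}) : exists D, dominating e S D /\ #|D| = gamma_on e S.
Proof.
rewrite /gamma_on.
have hS : dominating e S S.
  by apply/andP; split=> //; apply/forallP => x; apply/implyP => ->.
case: (arg_minnP (P:=dominating e S) (fun D : {set T} => #|D|) hS) => D0 hD0 _.
by exists D0.
Qed.

End L.

Theorem lemma2 (T : finType) (e : rel T)
    (e_sym : symmetric e) (e_irr : irreflexive e)
    (conn : connected_graph e) (v : T)
    (hcut : cut_vertex e v) (hcore : v \in core e)
    (hclique : forall x, x \in del v ->
        forall a b, a \in comp_del e v x :&: nbhd e v ->
                    b \in comp_del e v x :&: nbhd e v -> a != b -> e a b) :
  gamma_on e (del v) > gamma e /\ v \in Vplus e.
Proof.
suff H : gamma_on e (del v) > gamma e by split=> //; rewrite inE.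
set R := connect (induced_rel e (del v)).
have indsym : symmetric (induced_rel e (del v)).
  by move=> x y; rewrite /induced_rel e_sym andbCA.
have Rsym : forall x y, R x y = R y x.
  by move=> x y; rewrite /R (sym_connect_sym indsym).
have Redge : forall y z, y \in del v -> z \in del v -> e y z -> R y z.
  by move=> y z hy hz hyz; apply: connect1; rewrite /induced_rel hy hz hyz.
have compnb : forall x, x \in del v -> exists a, [/\ a \in comp_del e v x, a != v & e v a].
  move=> x hx; case/connectP: (conn x v) => p.
  elim: p x hx => [|y p IH] x hx /=.
    by move=> _ hv; move: hx; rewrite hv !inE eqxx.
  case/andP=> hxy hp hl.
  have hxv : x != v by move: hx; rewrite !inE andbT.
  case: (eqVneq y v) => [hyv|hyv].
    exists x; split=> //; last by rewrite e_sym -hyv.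
    by rewrite inE hx connect0.
  have hy : y \in del v by rewrite !inE hyv.
  case: (IH y hy hp hl) => a [ha hav hva]; exists a; split=> //.
  move: ha; rewrite !inE => /andP[-> hya] /=.
  exact: connect_trans (Redge x y hx hy hxy) hya.
have noavoid : forall E, dominating e setT E -> #|E| <= gamma e -> v \in E.
  move=> E hE hle; move: hcore; rewrite inE => /forallP/(_ E)/implyP; apply.
  by rewrite /is_mds hE eqn_leq hle gamma_le.
rewrite ltnNge; apply/negP => hle.
case: (@gamma_dom _ e (del v)) => D' [hD' hD'c].
case: (@gamma_dom _ e setT) => D [hD hDc].
change (gamma_on e setT) with (gamma e) in hDc.
have vD : v \in D by apply: noavoid; rewrite ?hDc.
move: hD' => /andP[hD'sub /forallP hD'dom].
move: hD => /andP[_ /forallP hDdom].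
case: hcut => x0 [y0 [hx0 _ _]].
have hvdel : v \notin del v by rewrite !inE eqxx.
case: (ltnP #|D'| (gamma e)) => hcase.
  case: (compnb x0 hx0) => a [_ hav hva].
  have hE : dominating e setT (a |: D').
    apply/andP; split; first exact: subsetT.
    apply/forallP => y; apply/implyP => _.
    case: (eqVneq y v) => [->|hyv].
      by apply/orP; right; apply/existsP; exists a; rewrite !inE eqxx /= hva.
    have hy : y \in del v by rewrite !inE hyv.
    move/implyP: (hD'dom y) => /(_ hy) /orP [hyD|/existsP[z /andP[hzD hyz]]].
      by rewrite !inE hyD orbT.
    by apply/orP; right; apply/existsP; exists z; rewrite !inE hzD orbT hyz.
  have := noavoid _ hE; rewrite cardsU1.
  move=> /(_ _)/setU1P; case.
    by case: (a \notin D') => /=; lia.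
    by move=> hva'; move: hav; rewrite -hva' eqxx.
  by move=> hv; move: hvdel; rewrite (subsetP hD'sub _ hv).
set P := equivalence_partition R (del v).
have hP : partition P (del v).
  apply: equivalence_partitionP => x y z _ _ _; split; first exact: connect0.
  move=> hxy; apply/idP/idP => h.
    by rewrite Rsym in hxy; exact: connect_trans hxy h.
  exact: connect_trans hxy h.
have hsum : forall X : {set T}, #|X :&: del v| = \sum_(B in P) #|X :&: B|.
  move=> X; case/and3P: hP => /eqP hcov htriv _.
  rewrite -sum1_card (eq_bigl (fun x => (x \in cover P) && (x \in X))); last first.
    by move=> y; rewrite hcov [in LHS]inE andbC.
  rewrite big_trivIset_cond //; apply: eq_bigr => B _.
  by rewrite -sum1_card; apply: eq_bigl => y; rewrite !inE andbC.
have hDv : #|D :&: del v| + 1 = #|D|.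
  have -> : D :&: del v = D :\ v by apply/setP => y; rewrite !inE andbT andbC.
  by rewrite [in RHS](cardsD1 v D) vD addnC.
have hD'v : #|D' :&: del v| = #|D'| by rewrite (setIidPl hD'sub).
have [B hB hlt] : exists2 B, B \in P & #|D :&: B| < #|D' :&: B|.
  case: (boolP [exists B in P, #|D :&: B| < #|D' :&: B|]) => [/exists_inP [B hB hlt]|hn].
    by exists B.
  exfalso; have : \sum_(B in P) #|D' :&: B| <= \sum_(B in P) #|D :&: B|.
    apply: leq_sum => B hB; rewrite leqNgt; apply: contra hn => h.
    by apply/exists_inP; exists B.
  rewrite -!hsum hD'v; lia.
case/imsetP: hB => x hx hBx.
have hBc : B = comp_del e v x by rewrite hBx.
have inB : forall y, (y \in B) = (y \in del v) && R x y by move=> y; rewrite hBx inE.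
case: (compnb x hx) => a [haB hav hva]; rewrite -hBc in haB.
set E := a |: ((D' :\: B) :|: (D :&: B)).
have hEc : #|E| <= gamma e.
  have h1 := cardsID B D'.
  have h2 : #|E| <= 1 + (#|D' :\: B| + #|D :&: B|).
    rewrite cardsU1 cardsU; case: (a \notin _) => /=; lia.
  lia.
have hEdom : dominating e setT E.
  apply/andP; split; first exact: subsetT.
  apply/forallP => y; apply/implyP => _.
  case: (eqVneq y v) => [->|hyv].
    by apply/orP; right; apply/existsP; exists a; rewrite !inE eqxx /= hva.
  have hy : y \in del v by rewrite !inE hyv.
  case hyB : (y \in B).
    move/implyP: (hDdom y) => /(_ (in_setT y)) /orP [hyD|/existsP[z /andP[hzD hyz]]].
      by rewrite !inE hyD hyB !orbT.
    case: (eqVneq z v) => [hzv|hzv].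
      subst z.
      case: (eqVneq y a) => [->|hya]; first by rewrite !inE eqxx.
      apply/orP; right; apply/existsP; exists a; rewrite !inE eqxx /=.
      apply: (hclique x hx) => //; last by rewrite -hBc inE haB inE hva.
      by rewrite -hBc inE hyB inE e_sym.
    have hz : z \in del v by rewrite !inE hzv.
    have hzB : z \in B.
      rewrite inB hz /=; move: hyB; rewrite inB => /andP[_ hxy].
      exact: connect_trans hxy (Redge y z hy hz hyz).
    by apply/orP; right; apply/existsP; exists z; rewrite !inE hzD hzB !orbT hyz.
  move/implyP: (hD'dom y) => /(_ hy) /orP [hyD|/existsP[z /andP[hzD hyz]]].
    by rewrite !inE hyD hyB orbT.
  have hz : z \in del v by rewrite (subsetP hD'sub).
  have hzB : z \in B = false.
    apply/negP; rewrite inB => /andP[_ hxz].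
    move: hyB; rewrite inB hy /= => /negP; apply.
    by apply: connect_trans hxz (Redge z y hz hy _); rewrite e_sym.
  by apply/orP; right; apply/existsP; exists z; rewrite !inE hzD hzB orbT hyz.
have := noavoid _ hEdom hEc.
move=> /setU1P [hva'|/setUP [/setDP [hvD' _]|/setIP [_ hvB]]].
- by move: hav; rewrite -hva' eqxx.
- by move: hvdel; rewrite (subsetP hD'sub _ hvD').
- by move: hvB; rewrite inB (negbTE hvdel).
Qed.
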